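(* Let $f:\mathbb{R}^d\to\mathbb{R}$ be convex and differentiable with a minimizer $x_\ast$. Let $x_0\in\mathbb{R}^d$, $r_\epsilon>0$, and let $g_0,g_1,\dots$ be vectors in $\mathbb{R}^d$ (the (stochastic) gradients used at $x_0,x_1,\dots$). Consider the DoWG iterates $x_{k+1}=x_k-\eta_k g_k$ with \[ \eta_k=\frac{\overline{r}_k^2}{\sqrt{v_k}},\qquad \overline{r}_k=\max\Big(\max_{i\le k}\|x_i-x_0\|,\ r_\epsilon\Big),\qquad v_k=\sum_{i=0}^k \overline{r}_i^2\|g_i\|^2 . \] Let $d_k=\|x_k-x_\ast\|$ and $\overline{d}_t=\max_{k\le t} d_k$. Then for every $t$, \[ \sum_{k=0}^{t-1}\overline{r}_k^2\langle\nabla f(x_k),x_k-x_\ast\rangle \le 2\overline{r}_t\big[\overline{d}_t+\overline{r}_t\big]\sqrt{v_{t-1}}+\sum_{k=0}^{t-1}\overline{r}_k^2\langle\nabla f(x_k)-g_k,x_k-x_\ast\rangle . \]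
   Context: All norms are Euclidean. The stepsizes are assumed well defined (i.e., $v_k>0$). *)

(* Defs.v *)
From HB Require Import structures.
From mathcomp Require Import all_boot all_order all_algebra.
From mathcomp Require Import all_classical all_reals all_analysis.
Set Implicit Arguments. Unset Strict Implicit. Unset Printing Implicit Defensive.
Import Order.TTheory GRing.Theory Num.Theory.
Import numFieldNormedType.Exports.
Local Open Scope ring_scope.

Definition dotv {R : realType} {d : nat} (u v : 'rV[R]_d) : R := (u *m v^T) 0 0.
Definition enorm {R : realType} {d : nat} (u : 'rV[R]_d) : R := Num.sqrt (dotv u u).

Definition grad {R : realType} {d : nat} (f : 'rV[R]_d -> R) (x : 'rV[R]_d)
  : 'rV[R]_d := \row_(i < d) derive f x (delta_mx 0 i).

Definition convex_fun {R : realType} {d : nat} (f : 'rV[R]_d -> R) : Prop :=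
  forall (x y : 'rV[R]_d) (t : R), 0 <= t -> t <= 1 ->
    f (t *: x + (1 - t) *: y) <= t * f x + (1 - t) * f y.

Definition rbar {R : realType} {d : nat} (x : nat -> 'rV[R]_d) (reps : R) (k : nat) : R :=
  Num.max (\big[Num.max/0]_(i < k.+1) enorm (x i - x 0%N)) reps.

(* Vsum n = sum_{i < n} rbar_i^2 ||g_i||^2 ; so v_k = Vsum (k+1), v_{t-1} = Vsum t *)
Definition Vsum {R : realType} {d : nat} (x g : nat -> 'rV[R]_d) (reps : R) (n : nat) : R :=
  \sum_(i < n) rbar x reps i ^+ 2 * enorm (g i) ^+ 2.

Definition vk {R : realType} {d : nat} (x g : nat -> 'rV[R]_d) (reps : R) (k : nat) : R :=
  Vsum x g reps k.+1.

Definition dowg_eta {R : realType} {d : nat} (x g : nat -> 'rV[R]_d) (reps : R) (k : nat) : R :=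
  rbar x reps k ^+ 2 / Num.sqrt (vk x g reps k).

Definition dbar {R : realType} {d : nat} (x : nat -> 'rV[R]_d) (xs : 'rV[R]_d) (t : nat) : R :=
  \big[Num.max/0]_(k < t.+1) enorm (x k - xs).

(* Main.v *)
Require Import Defs.
From HB Require Import structures.
From mathcomp Require Import all_boot all_order all_algebra.
From mathcomp Require Import all_classical all_reals all_analysis.
From mathcomp Require Import ring lra.
Import Order.TTheory GRing.Theory Num.Theory.
Import numFieldNormedType.Exports.
Local Open Scope ring_scope.
Set Implicit Arguments. Unset Strict Implicit.

Section Aux.
Variable R : realType.
Variable d : nat.
Implicit Types u v w : 'rV[R]_d.

Lemma dotvE u v : dotv u v = \sum_(i < d) u 0 i * v 0 i.
Proof. by rewrite /dotv !mxE; apply: eq_bigr => i _; rewrite mxE. Qed.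

Lemma dotvC u v : dotv u v = dotv v u.
Proof. rewrite !dotvE; apply: eq_bigr => i _; exact: mulrC. Qed.

Lemma dotvDl u v w : dotv (u + v) w = dotv u w + dotv v w.
Proof. rewrite !dotvE -big_split /=; apply: eq_bigr => i _; rewrite mxE; ring. Qed.

Lemma dotvNl u w : dotv (- u) w = - dotv u w.
Proof. rewrite !dotvE -sumrN; apply: eq_bigr => i _; rewrite mxE; ring. Qed.

Lemma dotvBl u v w : dotv (u - v) w = dotv u w - dotv v w.
Proof. by rewrite dotvDl dotvNl. Qed.

Lemma dotvZl (a : R) u w : dotv (a *: u) w = a * dotv u w.
Proof. rewrite !dotvE mulr_sumr; apply: eq_bigr => i _; rewrite mxE; ring. Qed.

Lemma dotvDr u v w : dotv w (u + v) = dotv w u + dotv w v.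
Proof. by rewrite dotvC dotvDl !(dotvC w). Qed.
Lemma dotvBr u v w : dotv w (u - v) = dotv w u - dotv w v.
Proof. by rewrite dotvC dotvBl !(dotvC w). Qed.
Lemma dotvZr (a : R) u w : dotv w (a *: u) = a * dotv w u.
Proof. by rewrite dotvC dotvZl (dotvC w). Qed.

Lemma dotv_ge0 u : 0 <= dotv u u.
Proof. rewrite dotvE; apply: sumr_ge0 => i _; rewrite -expr2; exact: sqr_ge0. Qed.

Lemma enorm_sqr u : enorm u ^+ 2 = dotv u u.
Proof. by rewrite /enorm sqr_sqrtr // dotv_ge0. Qed.

Lemma enorm_ge0 u : 0 <= enorm u.
Proof. exact: sqrtr_ge0. Qed.

Lemma dot0 u v : dotv u u = 0 -> dotv u v = 0.
Proof.
move=> uu0.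
have Hd : forall l : R, 0 <= dotv (u - l *: v) (u - l *: v) by move=> l; exact: dotv_ge0.
have := Hd (dotv u v / (dotv v v + 1)).
rewrite !(dotvBl, dotvBr, dotvZl, dotvZr) (dotvC v u) uu0.
set c := dotv u v; set e := dotv v v.
have e0 : 0 <= e by exact: dotv_ge0.
move=> H2.
have e1 : 0 < e + 1 by lra.
set q := c / (e + 1) in H2 *.
have cq : c = q * (e + 1) by rewrite /q mulfVK // gt_eqF.
rewrite cq in H2 *.
have H4 : q ^+ 2 * (e + 2) <= 0 by nra.
have -> : q = 0 by nra.
by rewrite mul0r.
Qed.

Lemma CS u v : dotv u v <= enorm u * enorm v.
Proof.
have Hu := enorm_sqr u; have Hv := enorm_sqr v.
have a0 := enorm_ge0 u; have b0 := enorm_ge0 v.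
set a := enorm u in Hu a0 *; set b := enorm v in Hv b0 *.
have H := dotv_ge0 (b *: u - a *: v).
rewrite !(dotvBl, dotvBr, dotvZl, dotvZr) (dotvC v u) -Hu -Hv in H.
have [a_eq0|a_ne0] := eqVneq a 0.
  by rewrite dot0 ?a_eq0 ?mul0r // -Hu a_eq0 expr2 mul0r.
have [b_eq0|b_ne0] := eqVneq b 0.
  by rewrite dotvC dot0 ?b_eq0 ?mulr0 // -Hv b_eq0 expr2 mul0r.
have ap : 0 < a by rewrite lt_def a_ne0 a0.
have bp : 0 < b by rewrite lt_def b_ne0 b0.
have abp : 0 < a * b by exact: mulr_gt0.
nra.
Qed.

Lemma enormN u : enorm (- u) = enorm u.
Proof. by rewrite /enorm dotvNl dotvC dotvNl opprK. Qed.

Lemma enorm_tri u v : enorm (u + v) <= enorm u + enorm v.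
Proof.
have h1 : enorm (u + v) ^+ 2 <= (enorm u + enorm v) ^+ 2.
  rewrite enorm_sqr !(dotvDl, dotvDr) (dotvC v u).
  have := CS u v; have := enorm_sqr u; have := enorm_sqr v. nra.
have := enorm_ge0 (u + v); have := enorm_ge0 u; have := enorm_ge0 v. nra.
Qed.
End Aux.

Lemma sum_sqrt_bound (R : realType) (a V : nat -> R) :
  V 0%N = 0 -> (forall k, V k.+1 = V k + a k) -> (forall k, 0 <= a k) ->
  (forall k, 0 < V k.+1) ->
  forall n, \sum_(k < n) a k / Num.sqrt (V k.+1) <= 2 * Num.sqrt (V n).
Proof.
move=> V0 VS a0 Vp.
have Vge0 : forall k, 0 <= V k by case=> [|k]; [rewrite V0|exact: ltW].
elim=> [|n IH]; first by rewrite big_ord0 V0 sqrtr0 mulr0.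
rewrite big_ord_recr /=.
have p0 : 0 < Num.sqrt (V n.+1) by rewrite sqrtr_gt0.
have hp := sqr_sqrtr (Vge0 n.+1); have hq := sqr_sqrtr (Vge0 n).
have q0 := sqrtr_ge0 (V n).
have : a n / Num.sqrt (V n.+1) <= 2 * (Num.sqrt (V n.+1) - Num.sqrt (V n)).
  rewrite ler_pdivrMr //.
  have ha : a n = V n.+1 - V n by rewrite VS; ring.
  rewrite ha. move: hp hq p0 q0. set p := Num.sqrt (V n.+1). set q := Num.sqrt (V n).
  move=> hp hq p0 q0. rewrite -hp -hq. have := sqr_ge0 (p - q). nra.
lra.
Qed.

Lemma telescope_bound (R : realType) (S e : nat -> R) (D2 : R) (t : nat) :
  S 0%N = 0 -> (forall k, S k <= S k.+1) -> (forall k, (k <= t)%N -> e k <= D2) ->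
  forall n, (n <= t)%N ->
  \sum_(k < n) S k.+1 * (e k - e k.+1) <= S n * (D2 - e n).
Proof.
move=> S0 Sinc eD.
elim=> [|n IH] Hn; first by rewrite big_ord0 S0 mul0r.
rewrite big_ord_recr /=.
have h1 := IH (ltnW Hn).
have h2 : S n * (D2 - e n) <= S n.+1 * (D2 - e n).
  by apply: ler_wpM2r; [rewrite subr_ge0 eD // ltnW | exact: Sinc].
lra.
Qed.

Lemma bmax_recl (R : realType) (F : nat -> R) n :
  \big[Num.max/0]_(j < n.+1) F j = Num.max (F 0%N) (\big[Num.max/0]_(j < n) F j.+1).
Proof. by rewrite big_ord_recl. Qed.

Lemma bmax_ge (R : realType) (F : nat -> R) n i : (i < n)%N ->
  F i <= \big[Num.max/0]_(j < n) F j.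
Proof.
elim: n F i => [//|n IH] F [|i] Hi; rewrite bmax_recl le_max ?lexx //.
by rewrite (IH (fun j => F j.+1)) ?orbT.
Qed.

Lemma bmax_le (R : realType) (F : nat -> R) n m : 0 <= m ->
  (forall i, (i < n)%N -> F i <= m) -> \big[Num.max/0]_(j < n) F j <= m.
Proof.
move=> m0; elim: n F => [|n IH] F H; first by rewrite big_ord0.
rewrite bmax_recl ge_max H // (IH (fun j => F j.+1)) // => i Hi; exact: H.
Qed.

Section Main.
Variable R : realType.
Variable d : nat.
Variables (x g : nat -> 'rV[R]_d) (reps : R) (xs : 'rV[R]_d).
Hypothesis reps0 : 0 < reps.

Lemma rbar_ge k : reps <= rbar x reps k.
Proof. by rewrite /rbar le_max lexx orbT. Qed.

Lemma rbar_bound i t : (i <= t)%N -> enorm (x i - x 0%N) <= rbar x reps t.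
Proof.
move=> it; rewrite /rbar le_max; apply/orP; left.
exact: (@bmax_ge _ (fun j => enorm (x j - x 0%N)) t.+1 i it).
Qed.

Lemma rbar_mono k t : (k <= t)%N -> rbar x reps k <= rbar x reps t.
Proof.
move=> kt; rewrite {1}/rbar ge_max rbar_ge andbT.
apply: (@bmax_le _ (fun j => enorm (x j - x 0%N)) k.+1 (rbar x reps t)).
  exact: le_trans (ltW reps0) (rbar_ge t).
move=> i Hi; apply: rbar_bound; apply: leq_trans kt; exact: Hi.
Qed.

Lemma Vsum_S k : Vsum x g reps k.+1 = Vsum x g reps k + rbar x reps k ^+ 2 * enorm (g k) ^+ 2.
Proof. by rewrite /Vsum big_ord_recr. Qed.

Lemma dbar_ge k t : (k <= t)%N -> enorm (x k - xs) <= dbar x xs t.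
Proof. move=> kt; exact: (@bmax_ge _ (fun j => enorm (x j - xs)) t.+1 k kt). Qed.

Lemma dbar_le t : dbar x xs t <= enorm (x t - xs) + 2 * rbar x reps t.
Proof.
have key : forall i, (i < t.+1)%N -> enorm (x i - xs) <= enorm (x t - xs) + 2 * rbar x reps t.
  move=> i Hi.
  have e1 : x i - xs = (x i - x 0%N) + ((x t - xs) + - (x t - x 0%N)).
    by apply/matrixP => a b; rewrite !mxE; ring.
  rewrite e1.
  have h1 := enorm_tri (x i - x 0%N) ((x t - xs) + - (x t - x 0%N)).
  have h2 := enorm_tri (x t - xs) (- (x t - x 0%N)).
  rewrite enormN in h2.
  have h3 := @rbar_bound i t Hi. have h4 := rbar_bound (leqnn t).
  lra.
apply: (@bmax_le _ (fun j => enorm (x j - xs)) t.+1 (enorm (x t - xs) + 2 * rbar x reps t)) => //.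
have h2 := enorm_ge0 (x t - xs); have h1 := rbar_ge t.
apply: addr_ge0 => //; apply: mulr_ge0 => //; exact: le_trans (ltW reps0) h1.
Qed.

Hypothesis Vp : forall k, 0 < vk x g reps k.
Hypothesis step : forall k, x k.+1 = x k - dowg_eta x g reps k *: g k.

Lemma term_id k :
  rbar x reps k ^+ 2 * dotv (g k) (x k - xs) =
  Num.sqrt (Vsum x g reps k.+1) * (enorm (x k - xs) ^+ 2 - enorm (x k.+1 - xs) ^+ 2) / 2
  + rbar x reps k ^+ 2 * (rbar x reps k ^+ 2 * enorm (g k) ^+ 2 / Num.sqrt (Vsum x g reps k.+1)) / 2.
Proof.
have sp : 0 < Num.sqrt (Vsum x g reps k.+1) by rewrite sqrtr_gt0; exact: Vp.
have e1 : x k.+1 - xs = (x k - xs) - dowg_eta x g reps k *: g k.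
  by rewrite step; apply/matrixP => a b; rewrite !mxE; ring.
rewrite e1 !enorm_sqr !(dotvBl, dotvBr, dotvZl, dotvZr) (dotvC (x k) (g k)) (dotvC xs (g k)) (dotvC xs (x k)).
rewrite /dowg_eta /vk.
move: sp; set s := Num.sqrt _ => sp.
field. by rewrite gt_eqF.
Qed.

Lemma main_ineq t :
  \sum_(k < t) rbar x reps k ^+ 2 * dotv (g k) (x k - xs)
  <= 2 * rbar x reps t * (dbar x xs t + rbar x reps t) * Num.sqrt (Vsum x g reps t).
Proof.
set V := Vsum x g reps.
set r := rbar x reps.
set D := dbar x xs t.
set a := fun k => r k ^+ 2 * enorm (g k) ^+ 2.
have V0 : V 0%N = 0 by rewrite /V /Vsum big_ord0.
have VS : forall k, V k.+1 = V k + a k by move=> k; exact: Vsum_S.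
have a0 : forall k, 0 <= a k by move=> k; rewrite /a mulr_ge0 // sqr_ge0.
have Vp' : forall k, 0 < V k.+1 by move=> k; exact: Vp.
have Vge0 : forall k, 0 <= V k by case=> [|k]; [rewrite V0|exact: ltW].
under eq_bigr => k _ do rewrite term_id.
rewrite big_split /= -!mulr_suml.
have T1 := @telescope_bound R (fun n => Num.sqrt (V n)) (fun k => enorm (x k - xs) ^+ 2) (D ^+ 2) t.
have T1' := T1 ltac:(by rewrite /= V0 sqrtr0) ltac:(by move=> k /=; rewrite ler_sqrt // VS; have := a0 k; lra)
  ltac:(by move=> k kt /=; have := dbar_ge kt; have := enorm_ge0 (x k - xs); rewrite /D; nra) t (leqnn t).
simpl in T1'.
have T2 := sum_sqrt_bound V0 VS a0 Vp' t.
have T3 : \sum_(k < t) r k ^+ 2 * (r k ^+ 2 * enorm (g k) ^+ 2 / Num.sqrt (V k.+1))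
          <= r t ^+ 2 * \sum_(k < t) a k / Num.sqrt (V k.+1).
  rewrite mulr_sumr; apply: ler_sum => k _.
  apply: ler_wpM2r.
    by apply: divr_ge0; [exact: a0 | exact: sqrtr_ge0].
  have := rbar_mono (ltnW (ltn_ord k)); have := rbar_ge k; rewrite -/r => h1 h2.
  have h0 := reps0. nra.
have Dle := dbar_le t. rewrite -/r -/D in Dle.
have ddle : enorm (x t - xs) <= D by exact: dbar_ge.
have dd0 : 0 <= enorm (x t - xs) by exact: enorm_ge0.
have rp : 0 < r t by exact: lt_le_trans reps0 (rbar_ge t).
have Q0 : 0 <= Num.sqrt (V t) by exact: sqrtr_ge0.
have H4 : D ^+ 2 - enorm (x t - xs) ^+ 2 <= 4 * r t * D by nra.
have H5 : Num.sqrt (V t) * (D ^+ 2 - enorm (x t - xs) ^+ 2) <= Num.sqrt (V t) * (4 * r t * D).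
  exact: ler_wpM2l.
have H6 : r t ^+ 2 * (\sum_(k < t) a k / Num.sqrt (V k.+1)) <= r t ^+ 2 * (2 * Num.sqrt (V t)).
  by apply: ler_wpM2l => //; exact: sqr_ge0.
have : 0 <= r t ^+ 2 * Num.sqrt (V t) by rewrite mulr_ge0 // sqr_ge0.
rewrite /= in T1' H5 *.
lra.
Qed.
End Main.

Unset Implicit Arguments.

Theorem lemma4 (R : realType) (d : nat) (f : 'rV[R]_d -> R) (xs x0 : 'rV[R]_d)
  (reps : R) (g x : nat -> 'rV[R]_d) :
  convex_fun f ->
  (forall y : 'rV[R]_d, differentiable f y) ->
  (forall y : 'rV[R]_d, f xs <= f y) ->
  0 < reps ->
  x 0%N = x0 ->
  (forall k : nat, 0 < vk x g reps k) ->
  (forall k : nat, x k.+1 = x k - dowg_eta x g reps k *: g k) ->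
  forall t : nat,
    \sum_(k < t) rbar x reps k ^+ 2 * dotv (grad f (x k)) (x k - xs)
    <= 2 * rbar x reps t * (dbar x xs t + rbar x reps t) * Num.sqrt (Vsum x g reps t)
       + \sum_(k < t) rbar x reps k ^+ 2 * dotv (grad f (x k) - g k) (x k - xs).
Proof.
move=> _ _ _ reps0 _ Vp step t.
have M := @main_ineq R d x g reps xs reps0 Vp step t.
have E : \sum_(k < t) rbar x reps k ^+ 2 * dotv (grad f (x k)) (x k - xs)
  = \sum_(k < t) rbar x reps k ^+ 2 * dotv (g k) (x k - xs)
    + \sum_(k < t) rbar x reps k ^+ 2 * dotv (grad f (x k) - g k) (x k - xs).
  rewrite -big_split /=; apply: eq_bigr => k _; rewrite dotvBl; ring.
rewrite E; lra.
Qed.
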